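(* Let $(U,\mathrm{dist})$ be a metric space, $\gamma>0$, $\eta>0$, $\Lambda\in\mathbb{R}_{>0}\cup\{\infty\}$, $\nu>1$. Let $f:U\to\mathbb{R}$ and let $B(\cdot)$ be a $g_E$-smooth upper bound on $\mathrm{L}_{f,\Lambda}$, where $g_E(x,x')=e^{\gamma\,\mathrm{dist}(x,x')}$. Then the mechanism $M$ which on input $x$ releases $M(x)=f(x)+\frac{B(x)}{\eta}Z$ with $Z\sim\mathcal{T}_\nu(0,1)$ is $(\varepsilon,0,\Lambda)$-GP, where $\varepsilon=\nu\gamma+\frac{\nu+1}{2\sqrt{\nu}}\eta$.
   Context: $\mathrm{L}_{f,\Lambda}(x)$ is the infimum of all $K$ such that $|f(x)-f(x')|\le K\,\mathrm{dist}(x,x')$ for all $x'\in U$ with $\mathrm{dist}(x,x')\le\Lambda$. A $g$-smooth upper bound on $\mathrm{L}_{f,\Lambda}$ is $B:U\to\mathbb{R}_{\ge0}$ with (1) $B(x)\ge\mathrm{L}_{f,\Lambda}(x)$ for all $x$ and (2) $B(x)\le g(x,x')B(x')$ for all $x,x'\in U$. $\mathcal{T}_\nu(0,1)$ is Student's $t$-distribution with $\nu$ degrees of freedom, density $\frac{c_\nu}{\sqrt\nu}(1+y^2/\nu)^{-(\nu+1)/2}$, $c_\nu=\frac{\Gamma((\nu+1)/2)}{\sqrt\pi\,\Gamma(\nu/2)}$. A mechanism $M$ with outputs in $\mathbb{R}$ is $(\varepsilon,\delta,\Lambda)$-GP if for every measurable $S\subseteq\mathbb{R}$ and all $x,x'$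 with $\mathrm{dist}(x,x')\le\Lambda$: $\Pr[M(x)\in S]\le e^{\varepsilon\,\mathrm{dist}(x,x')}\Pr[M(x')\in S]+\delta$. *)

(* Defs.v *)
From HB Require Import structures.
From mathcomp Require Import all_boot all_order all_algebra.
From mathcomp Require Import all_classical all_reals all_analysis.
Set Implicit Arguments. Unset Strict Implicit. Unset Printing Implicit Defensive.
Import Order.TTheory GRing.Theory Num.Theory.
Import numFieldNormedType.Exports.
Local Open Scope classical_set_scope.
Local Open Scope ring_scope.

Definition Gamma {R : realType} (s : R) : R :=
  fine (\int[@lebesgue_measure R]_(t in `]0%R, +oo[)
          ((t `^ (s - 1)) * expR (- t))%:E)%E.

Definition t_const {R : realType} (nu : R) : R :=
  Gamma ((nu + 1) / 2) / (Num.sqrt pi * Gamma (nu / 2)).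

Definition t_density {R : realType} (nu : R) (y : R) : R :=
  t_const nu / Num.sqrt nu * (1 + y ^+ 2 / nu) `^ (- ((nu + 1) / 2)).

Definition local_lip {R : realType} {U : Type} (dist : U -> U -> R)
    (f : U -> R) (Lambda : \bar R) (x : U) : \bar R :=
  ereal_inf [set K%:E | K in
     [set K : R | forall x' : U, ((dist x x')%:E <= Lambda)%E ->
                     `|f x - f x'| <= K * dist x x']].

Definition smooth_upper_bound {R : realType} {U : Type} (dist : U -> U -> R)
    (f : U -> R) (Lambda : \bar R) (g : U -> U -> R) (B : U -> R) : Prop :=
  (forall x, 0 <= B x) /\
  (forall x, (local_lip dist f Lambda x <= (B x)%:E)%E) /\
  (forall x x', B x <= g x x' * B x').

(* Pr[M(x) \in S] for M(x) = f x + (B x / eta) Z, Z ~ T_nu(0,1):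
   the T_nu-measure of {z | f x + (B x / eta) z \in S}. *)
Definition mech_prob {R : realType} {U : Type} (f B : U -> R) (eta nu : R)
    (x : U) (S : set R) : \bar R :=
  (\int[@lebesgue_measure R]_(z in [set z | S (f x + B x / eta * z)%R])
      (t_density nu z)%:E)%E.

(* Main.v *)
Require Import Defs.
From HB Require Import structures.
From mathcomp Require Import all_boot all_order all_algebra.
From mathcomp Require Import all_classical all_reals all_analysis.
From mathcomp Require Import ring lra measurable_realfun.
Import Order.TTheory GRing.Theory Num.Theory.
Import numFieldNormedType.Exports.
Local Open Scope classical_set_scope.
Local Open Scope ring_scope.
Set Implicit Arguments. Unset Strict Implicit. Unset Printing Implicit Defensive.

Section S.
Context {R : realType}.

Lemma deriv_mono (f df : R -> R) :
  (forall t : R, is_derive t (1:R) f (df t)) -> (forall t, 0 <= df t) ->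
  forall u v, u <= v -> f u <= f v.
Proof.
move=> hd hge u v uv.
have [| c _ hc] := MVT_segment uv (fun x _ => hd x).
  apply/continuous_subspaceT => r.
  apply/differentiable_continuous/derivable1_diffP.
  by have [] := hd r.
by rewrite -subr_ge0 hc mulr_ge0 // subr_ge0.
Qed.

Let g (t : R) := t - ln (1 + t ^+ 2).

Lemma g_mono u v : u <= v -> g u <= g v.
Proof.
apply: (@deriv_mono g (fun t => 1 - (1 + t ^+ 2)^-1 * (t *+ 2))).
- move=> t.
  have h1 : 0 < 1 + t ^+ 2 by rewrite ltr_pwDl // sqr_ge0.
  rewrite /g.
  apply: is_deriveB.
  have := @is_derive1_comp R (@ln R) (fun t => 1 + t ^+ 2) t (1 + t ^+ 2)^-1 (t *+ 2).
  apply.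
  + exact: is_derive1_ln.
  + apply: is_derive_eq.
    by rewrite add0r mul1r -[t%:A]/(t * 1) mulr1 mulr2n.
- move=> t.
  have h1 : 0 < 1 + t ^+ 2 by rewrite ltr_pwDl // sqr_ge0.
  rewrite subr_ge0 ler_pdivrMl // mulr1 -subr_ge0.
  have -> : 1 + t ^+ 2 - t *+ 2 = (t - 1) ^+ 2 by rewrite sqrrB1; ring.
  exact: sqr_ge0.
Qed.

Lemma lnlip (u v : R) : ln (1 + v ^+ 2) - ln (1 + u ^+ 2) <= `|v - u|.
Proof.
have [uv|vu] := leP u v.
  have := g_mono uv; rewrite /g => h.
  rewrite ger0_norm ?subr_ge0 //; lra.
have hh : - u <= - v by rewrite lerN2 ltW.
have := g_mono hh; rewrite /g !sqrrN => h.
rewrite ltr0_norm ?subr_lt0 //; lra.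
Qed.

Definition Lf (nu t : R) := ln (1 + t ^+ 2 / nu).

Lemma step1 (nu z w : R) : 0 < nu ->
  - ((nu + 1) / 2) * Lf nu z <= - ((nu + 1) / 2) * Lf nu w
     + (nu + 1) / (2 * Num.sqrt nu) * `|z - w|.
Proof.
move=> nu0.
have sq0 : 0 < Num.sqrt nu by rewrite sqrtr_gt0.
have hL t : Lf nu t = ln (1 + (t / Num.sqrt nu) ^+ 2).
  by rewrite /Lf expr_div_n sqr_sqrtr // ltW.
have h := lnlip (z / Num.sqrt nu) (w / Num.sqrt nu).
rewrite -!hL -mulrBl normrM (@ger0_norm _ (Num.sqrt nu)^-1) in h; last first.
  by rewrite invr_ge0 ltW.
rewrite distrC in h.
have k0 : 0 <= (nu + 1) / 2 by apply: divr_ge0; lra.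
have := ler_wpM2l k0 h.
rewrite invrM ?unitfE ?gt_eqF //.
have -> : (nu + 1) / 2 * (`|z - w| * (Num.sqrt nu)^-1) =
   (nu + 1) / 2 * (Num.sqrt nu)^-1 * `|z - w| by ring.
lra.
Qed.

Lemma step2 (nu b b' G u : R) : 1 < nu -> 0 < b -> 0 < b' -> 0 <= G ->
  ln b' - ln b <= G -> ln b - ln b' <= G ->
  - ln b - ((nu + 1) / 2) * Lf nu (u * (b' / b))
    <= nu * G - ln b' - ((nu + 1) / 2) * Lf nu u.
Proof.
move=> nu1 b0 b'0 G0 h1 h2.
have nu0 : 0 < nu by lra.
have k0 : 0 <= (nu + 1) / 2 by apply: divr_ge0; lra.
have X0 t : 0 < 1 + t ^+ 2 / nu.
  by rewrite ltr_pwDl // divr_ge0 // ?sqr_ge0 // ltW.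
have [bb'|b'b] := leP b b'.
  have : Lf nu u <= Lf nu (u * (b' / b)).
    rewrite /Lf ler_ln ?posrE ?X0 // lerD2l ler_pM2r ?invr_gt0 //.
    rewrite exprMn ler_peMr ?sqr_ge0 // exprn_ege1 //.
    by rewrite ler_pdivlMr // mul1r.
  move=> hL.
  have := ler_wpM2l k0 hL.
  have : G <= nu * G by rewrite ler_peMl //; lra.
  lra.
have : Lf nu u <= Lf nu (u * (b' / b)) + 2 * (ln b - ln b').
  have -> : 2 * (ln b - ln b') = ln ((b / b') ^+ 2).
    rewrite lnXn ?divr_gt0 // ln_div ?posrE ?invr_gt0 //; ring.
  rewrite /Lf -lnM ?posrE ?X0 ?exprn_gt0 ?divr_gt0 ?invr_gt0 //.
  rewrite ler_ln ?posrE ?X0 ?mulr_gt0 ?exprn_gt0 ?divr_gt0 ?invr_gt0 //.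
  have e : (u * (b' / b)) ^+ 2 / nu * (b / b') ^+ 2 = u ^+ 2 / nu.
    by field; rewrite ?gt_eqF.
  rewrite mulrDl mul1r e lerD2r exprn_ege1 //.
  by rewrite ler_pdivlMr // mul1r ltW.
move=> hL.
have := ler_wpM2l k0 hL.
have : nu * (ln b - ln b') <= nu * G by rewrite ler_pM2l.
lra.
Qed.
End S.
Section T.
Context {R : realType}.

Lemma Gamma_ge0 (s : R) : 0 <= Gamma s.
Proof.
apply: fine_ge0; apply: integral_ge0 => t _.
by rewrite lee_fin mulr_ge0 ?powR_ge0 ?expR_ge0.
Qed.

Lemma tdE (nu t : R) : 0 < nu -> t_density nu t =
  t_const nu / Num.sqrt nu * expR (- ((nu + 1) / 2) * Lf nu t).
Proof.
move=> nu0; rewrite /t_density /Lf /powR ifF //.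
by rewrite gt_eqF // ltr_pwDl // divr_ge0 // ?sqr_ge0 // ltW.
Qed.

Lemma tdensity_ge0 (nu t : R) : 0 <= t_density nu t.
Proof.
rewrite /t_density /t_const mulr_ge0 ?powR_ge0 // !divr_ge0 ?mulr_ge0 ?Gamma_ge0 ?sqrtr_ge0 //.
Qed.

Lemma K_ge0 (nu : R) : 0 <= t_const nu / Num.sqrt nu.
Proof.
by rewrite /t_const !divr_ge0 ?mulr_ge0 ?Gamma_ge0 ?sqrtr_ge0.
Qed.

Lemma dens_cmp (nu a a' b b' G H y : R) : 1 < nu -> 0 < b -> 0 < b' -> 0 <= G ->
  ln b' - ln b <= G -> ln b - ln b' <= G -> `|a - a'| <= H * b ->
  b^-1 * t_density nu ((y - a) / b) <=
  expR (nu * G + (nu + 1) / (2 * Num.sqrt nu) * H) * (b'^-1 * t_density nu ((y - a') / b')).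
Proof.
move=> nu1 b0 b'0 G0 h1 h2 hH.
rewrite !tdE; try lra.
have eb (c : R) : 0 < c -> c^-1 = expR (- ln c) by move=> c0; rewrite expRN lnK.
set K := t_const nu / Num.sqrt nu.
set E1 := expR (- _ * Lf nu ((y - a) / b)).
set E2 := expR (- _ * Lf nu ((y - a') / b')).
set E := expR (nu * G + _).
have -> : b^-1 * (K * E1) = K * (b^-1 * E1) by ring.
have -> : E * (b'^-1 * (K * E2)) = K * (E * (b'^-1 * E2)) by ring.
apply: ler_wpM2l; first exact: K_ge0.
rewrite (eb b) // (eb b') // /E /E1 /E2 mulrA -!expRD ler_expR.
have s1 := @step1 R nu ((y - a) / b) ((y - a') / b) ltac:(lra).
have s2 := @step2 R nu b b' G ((y - a') / b') nu1 b0 b'0 G0 h1 h2.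
have ew : (y - a') / b' * (b' / b) = (y - a') / b by field; rewrite ?gt_eqF.
rewrite ew in s2.
have hz : `|(y - a) / b - (y - a') / b| <= H.
  have -> : (y - a) / b - (y - a') / b = (a' - a) / b by field; rewrite gt_eqF.
  rewrite normrM distrC (@ger0_norm _ b^-1); last by rewrite invr_ge0 ltW.
  by rewrite ler_pdivrMr.
have C0 : 0 <= (nu + 1) / (2 * Num.sqrt nu).
  by rewrite divr_ge0 ?mulr_ge0 ?sqrtr_ge0 //; lra.
have := ler_wpM2l C0 hz.
lra.
Qed.
End T.
Section M.
Context {R : realType}.
Local Notation mu := (@lebesgue_measure R).

Lemma mtd (nu : R) : measurable_fun [set: R] (t_density nu).
Proof.
rewrite /t_density.
apply: measurable_funM => //.
apply: (measurableT_comp (measurable_powR _)).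
apply: measurable_funD => //.
by apply: measurable_funM => //.
Qed.

Lemma m_affine (a b : R) : measurable_fun [set: R] (fun z : R => a + b * z).
Proof.
apply: measurable_funD => //; apply: measurable_funM => //.
Qed.

Definition aff (a b : R) (z : R) := a + b * z.
Lemma m_affine' (a b : R) : measurable_fun [set: measurableTypeR R] (aff a b : measurableTypeR R -> measurableTypeR R).
Proof. exact: m_affine. Qed.
Definition PFa (a b : R) : {measure set (measurableTypeR R) -> \bar R} :=
  measure_function_pushforward__canonical__measure_function_Measure mu (m_affine' a b).

Lemma push_affine (a b : R) (b0 : 0 < b) (A : set R) : measurable A ->
  mu A = mscale (NngNum (ltW b0)) (PFa a b) A.
Proof.
move=> mA; apply: lebesgue_measure_unique => //= _ [[x1 x2] _ <-].
rewrite /mscale /= /pushforward /=.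
have -> : aff a b @^-1` `]x1, x2] = `](x1 - a) / b, (x2 - a) / b]%classic.
  apply/seteqP; split => z /=; rewrite !in_itv /= /aff ltr_pdivrMr // ler_pdivlMr // (mulrC z b).
    by move=> /andP[h1 h2]; apply/andP; split; lra.
  by move=> /andP[h1 h2]; apply/andP; split; lra.
rewrite !lebesgue_measure_itv /=.
rewrite !lte_fin ltr_pM2r ?invr_gt0 // ltrD2r.
case: ifPn => _; last by rewrite mule0.
rewrite -!EFinD -EFinM; congr (_%:E); field; exact: lt0r_neq0.
Qed.

Lemma mQl (nu a b : R) (S : set R) :
  measurable_fun S (fun y => ((b^-1 * t_density nu ((y - a) / b))%R)%:E).
Proof.
  apply/measurable_EFinP.
  have m1 : measurable_fun [set: R] (fun y : R => y - a) by exact: measurable_funB.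
  have m2 : measurable_fun [set: R] (fun y : R => (y - a) / b).
    exact: (measurable_funM m1 (measurable_cst _)).
  have m3 : measurable_fun S (fun y : R => t_density nu ((y - a) / b)).
    exact: (measurable_funS _ _ (measurableT_comp (mtd nu) m2)).
  exact: (measurable_funM (measurable_cst _) m3).
Qed.

Lemma cov (nu a b : R) (S : set R) : 0 < b -> measurable S ->
  (\int[mu]_(z in [set z | S (a + b * z)%R]) (t_density nu z)%:E
   = \int[mu]_(y in S) ((b^-1 * t_density nu ((y - a) / b))%R)%:E)%E.
Proof.
move=> b0 mS.
set phi := aff a b.
have mphi := m_affine a b.
have mQ : measurable_fun S (fun y => (b^-1 * t_density nu ((y - a) / b))%:E).
  apply/measurable_EFinP.
  have m1 : measurable_fun [set: R] (fun y : R => y - a) by exact: measurable_funB.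
  have m2 : measurable_fun [set: R] (fun y : R => (y - a) / b).
    exact: (measurable_funM m1 (measurable_cst _)).
  have m3 : measurable_fun S (fun y : R => t_density nu ((y - a) / b)).
    exact: (measurable_funS _ _ (measurableT_comp (mtd nu) m2)).
  exact: (measurable_funM (measurable_cst _) m3).
have Q0 y : (0 <= (b^-1 * t_density nu ((y - a) / b))%:E)%E.
  rewrite lee_fin; apply: mulr_ge0; last exact: tdensity_ge0.
  by rewrite invr_ge0; exact: ltW.
have E1 := @eq_measure_integral _ (measurableTypeR R) R S (mscale (NngNum (ltW b0)) (PFa a b)) mu
   (fun y => ((b^-1 * t_density nu ((y - a) / b))%R)%:E) (fun A mA _ => push_affine a b0 mA).
rewrite E1.
rewrite ge0_integral_mscale //.
have E2 := @ge0_integral_pushforward _ _ _ _ _ _ (m_affine' a b) mu S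
   (fun y => ((b^-1 * t_density nu ((y - a) / b))%R)%:E) mS mQ (fun y _ => Q0 y).
rewrite [X in _ = (_ * X)%E]E2 /=.
have mpre : measurable (aff a b @^-1` S).
  by rewrite -[X in measurable X]setTI; exact: (m_affine a b).
have mtd' : measurable_fun (aff a b @^-1` S) (fun z => (t_density nu z)%:E).
  by apply/measurable_EFinP; exact: (measurable_funS _ _ (mtd nu)).
rewrite (@eq_integral _ (measurableTypeR R) _ _ _ (fun z => (b^-1%:E * (t_density nu z)%:E)%E)
   (fun x => ((b^-1 * t_density nu ((aff a b x - a) / b))%R)%:E)); last first.
  move=> z _; rewrite /= /aff.
  by have -> : (a + b * z - a) / b = z by field; rewrite gt_eqF.
rewrite ge0_integralZl //; last first.
- by rewrite lee_fin invr_ge0 ltW.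
- by move=> z _; rewrite lee_fin tdensity_ge0.
rewrite muleA -EFinM divff ?gt_eqF // mul1e.
done.
Qed.
End M.
Section Main.
Context {R : realType}.

Lemma lip_bound (U : Type) (dist : U -> U -> R) (f : U -> R) (Lambda : \bar R)
  (x x' : U) (Bx : R) :
  (local_lip dist f Lambda x <= Bx%:E)%E -> ((dist x x')%:E <= Lambda)%E ->
  0 < dist x x' -> `|f x - f x'| <= Bx * dist x x'.
Proof.
move=> hl hd d0.
apply/ler_addgt0Pr => e e0.
have : (local_lip dist f Lambda x < (Bx + e / dist x x')%:E)%E.
  apply: (le_lt_trans hl); rewrite lte_fin ltrDl divr_gt0 //.
move/ereal_inf_lt => [_ [K HK <-]]; rewrite lte_fin => hK.
apply: (le_trans (HK x' hd)).
have : K * dist x x' <= (Bx + e / dist x x') * dist x x'.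
  by rewrite ler_pM2r // ltW.
by rewrite mulrDl divfK ?gt_eqF.
Qed.

Lemma ln_le_of (b b' G : R) : 0 < b -> 0 < b' -> b' <= expR G * b -> ln b' - ln b <= G.
Proof.
move=> b0 b'0 h.
have : ln b' <= ln (expR G * b) by rewrite ler_ln ?posrE ?mulr_gt0 ?expR_gt0.
rewrite lnM ?posrE ?expR_gt0 // expRK; lra.
Qed.

End Main.

Unset Implicit Arguments. Set Strict Implicit.

Theorem mainTheorem5 (R : realType) (U : Type) (dist : U -> U -> R)
  (dist_ge0 : forall x y, 0 <= dist x y)
  (dist_eq0 : forall x y, dist x y = 0 <-> x = y)
  (dist_sym : forall x y, dist x y = dist y x)
  (dist_tri : forall x y z, dist x z <= dist x y + dist y z)
  (gamma eta nu : R) (Lambda : \bar R)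
  (hgamma : 0 < gamma) (heta : 0 < eta) (hLambda : (0 < Lambda)%E) (hnu : 1 < nu)
  (f B : U -> R)
  (hB : smooth_upper_bound dist f Lambda (fun x x' => expR (gamma * dist x x')) B) :
  let eps := nu * gamma + (nu + 1) / (2 * Num.sqrt nu) * eta in
  forall (S : set R), measurable S ->
  forall x x' : U, ((dist x x')%:E <= Lambda)%E ->
    (mech_prob f B eta nu x S
       <= (expR (eps * dist x x'))%:E * mech_prob f B eta nu x' S + 0%:E)%E.
Proof.
move=> eps S mS x x' hd.
have [hB0 [hlip hsm]] := hB.
have [d0|dpos] : dist x x' = 0 \/ 0 < dist x x'.
  by have := dist_ge0 x x'; rewrite le_eqVlt => /orP[/eqP <-|->]; [left|right].
  have xx : x = x' by apply/dist_eq0.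
  subst x'; rewrite d0 mulr0 expR0 mul1e adde0; exact: le_refl.
have lipb := lip_bound (hlip x) hd dpos.
have eps0 : 0 <= eps.
  rewrite /eps addr_ge0 // ?mulr_ge0 ?divr_ge0 ?sqrtr_ge0 //; try lra.
have E1 : (1 <= expR (eps * dist x x'))%R.
  apply: le_trans (expR_ge1Dx _); rewrite lerDl mulr_ge0 //; exact: ltW.
have [Bx0|Bxpos] : B x = 0 \/ 0 < B x.
  by have := hB0 x; rewrite le_eqVlt => /orP[/eqP <-|->]; [left|right].
  have Bx'0 : B x' = 0.
    apply/eqP; rewrite eq_le hB0 andbT.
    by have := hsm x' x; rewrite Bx0 mulr0.
  have fxx : f x = f x'.
    by apply/eqP; rewrite -subr_eq0 -normr_eq0 eq_le normr_ge0 andbT; move: lipb; rewrite Bx0 mul0r.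
  rewrite /mech_prob Bx0 Bx'0 fxx adde0.
  apply: lee_pemull; last by rewrite lee_fin.
  by apply: integral_ge0 => z _; rewrite lee_fin tdensity_ge0.
have Bx'pos : 0 < B x'.
  rewrite lt_neqAle hB0 andbT; apply/eqP => h.
  have := hsm x x'; rewrite -h mulr0 => /(lt_le_trans Bxpos); rewrite ltxx.
  done.
set b := B x / eta; set b' := B x' / eta.
have b0 : 0 < b by rewrite divr_gt0.
have b'0 : 0 < b' by rewrite divr_gt0.
rewrite /mech_prob -/b -/b' (@cov R nu (f x) b S b0 mS) (@cov R nu (f x') b' S b'0 mS) adde0.
have Q0 (a c : R) y : 0 < c -> (0 <= ((c^-1 * t_density nu ((y - a) / c))%R)%:E)%E.
  move=> c0; rewrite lee_fin; apply: mulr_ge0; last exact: tdensity_ge0.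
  by rewrite invr_ge0; exact: ltW.
rewrite -ge0_integralZl //.
all: try (solve [exact: (@mQl R nu (f x') b' S) | by move=> y _; exact: Q0 | by rewrite lee_fin expR_ge0]).
apply: ge0_le_integral => //.
all: try (solve [exact: (@mQl R nu (f x') b' S) | exact: (@mQl R nu (f x) b S) | by move=> y _; exact: Q0 |
   by move=> y _; rewrite -EFinM lee_fin mulr_ge0 ?expR_ge0 //; rewrite -lee_fin; exact: Q0 |
   by apply: measurable_funeM; exact: (@mQl R nu (f x') b' S) ]).
move=> y _; rewrite -EFinM lee_fin.
  have G0 : 0 <= gamma * dist x x' by rewrite mulr_ge0 // ltW.
  have h1 : ln b' - ln b <= gamma * dist x x'.
    apply: ln_le_of => //.
    have := hsm x' x; rewrite dist_sym => h.
    by rewrite /b /b' mulrA ler_pM2r ?invr_gt0.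
  have h2 : ln b - ln b' <= gamma * dist x x'.
    apply: ln_le_of => //.
    have := hsm x x' => h.
    by rewrite /b /b' mulrA ler_pM2r ?invr_gt0.
  have hH : `|f x - f x'| <= eta * dist x x' * b.
    have -> : eta * dist x x' * b = B x * dist x x' by rewrite /b; field; rewrite gt_eqF.
    exact: lipb.
  have := @dens_cmp R nu (f x) (f x') b b' (gamma * dist x x') (eta * dist x x') y
    hnu b0 b'0 G0 h1 h2 hH.
  have -> : nu * (gamma * dist x x') + (nu + 1) / (2 * Num.sqrt nu) * (eta * dist x x')
    = eps * dist x x' by rewrite /eps; ring.
  done.
Qed.
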